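(* Let $\mathcal{D}$ be a set, $\Sigma$ a finite set and $R\subseteq\mathcal{D}^\Sigma$. Suppose one of the following holds: (i) $R\neq\mathcal{D}^\Sigma$, but $\pi_\Lambda R=\mathcal{D}^\Lambda$ for every non-empty proper subset $\emptyset\subset\Lambda\subset\Sigma$; (ii) $\neg R$ is non-empty, but $\pi_{\{i\}}(\neg R)\neq\mathcal{D}$ for every $i\in\Sigma$. Then $R$ is non-degenerate.
   Context: An attributed relation is a subset $R\subseteq\mathcal{D}^\Sigma$ with $\Sigma$ a finite set of attributes; for $\Lambda\subseteq\Sigma$, $\pi_\Lambda R=\{a|_\Lambda: a\in R\}$, and $\neg R=\mathcal{D}^\Sigma\setminus R$. $R$ is a Cartesian product over a partition $\Sigma=\Lambda_1\cup\dots\cup\Lambda_m$ if there exist $R^{\Lambda_i}\subseteq\mathcal{D}^{\Lambda_i}$ with $R=\{a\in\mathcal{D}^\Sigma: a|_{\Lambda_i}\in R^{\Lambda_i}\ \forall i\}$. $R$ is degenerate if it is a Cartesian product over some partition with $m>1$ and all $\Lambda_i\neq\emptyset$; otherwise non-degenerate. *)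

(* Defs.v *)
From mathcomp Require Import all_boot.
Unset Printing Implicit Defensive.

Definition arel (D : Type) (S : finType) := (S -> D) -> Prop.

Definition restr (D : Type) (S : finType) (a : S -> D) (L : {set S}) :
  {x : S | x \in L} -> D := fun x => a (sval x).
Arguments restr {D S} a L _.

Definition proj (D : Type) (S : finType) (L : {set S}) (R : arel D S) :
  ({x : S | x \in L} -> D) -> Prop :=
  fun b => exists a, R a /\ restr a L = b.
Arguments proj {D S} L R _.

Definition negrel (D : Type) (S : finType) (R : arel D S) : arel D S :=
  fun a => ~ R a.
Arguments negrel {D S} R _.

Definition cart_prod_over (D : Type) (S : finType) (R : arel D S)
  (P : {set {set S}}) : Prop :=
  exists RL : forall L : {set S}, ({x : S | x \in L} -> D) -> Prop,
    forall a : S -> D, R a <-> (forall L, L \in P -> RL L (restr a L)).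
Arguments cart_prod_over {D S} R P.

(* Degenerate: Cartesian product over a partition into m > 1 non-empty blocks.
   (mathcomp's [partition] already requires set0 \notin P.) *)
Definition degenerate (D : Type) (S : finType) (R : arel D S) : Prop :=
  exists P : {set {set S}},
    partition P [set: S] /\ 1 < #|P| /\ cart_prod_over R P.
Arguments degenerate {D S} R.

Definition non_degenerate (D : Type) (S : finType) (R : arel D S) : Prop :=
  ~ degenerate R.
Arguments non_degenerate {D S} R.

(* Main.v *)
Require Import Defs.
From mathcomp Require Import all_boot.
From Stdlib Require Import Classical FunctionalExtensionality.

Lemma other_pt (S : finType) (P : {set {set S}}) (L : {set S}) :
  partition P [set: S] -> 1 < #|P| -> L \in P -> exists i, i \notin L.
Proof.
move=> /and3P [_ /trivIsetP tP n0] /card_gt1P [x [y [xP yP xy]]] LP.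
have [L1 [L1P L1L]] : exists L1, L1 \in P /\ L1 != L.
  case: (eqVneq x L) => [exL|]; last by exists x.
  by exists y; split => //; rewrite -exL eq_sym.
have : L1 != set0 by apply/negP => /eqP E; rewrite -E L1P in n0.
case/set0Pn => i iL1; exists i.
by rewrite (disjointFr (tP _ _ L1P LP L1L) iL1).
Qed.

Theorem theorem4 (D : Type) (S : finType) (R : arel D S) :
  ( (exists a, ~ R a) /\
    (forall L : {set S}, L != set0 -> L \proper [set: S] ->
       forall b : {x : S | x \in L} -> D, proj L R b) )
  \/
  ( (exists a, negrel R a) /\
    (forall i : S, ~ (forall b : {x : S | x \in [set i]} -> D,
                        proj [set i] (negrel R) b)) ) ->
  non_degenerate R.
Proof.
move=> H [P [Pp [P1 [RL HR]]]].
have Pp' := Pp; move: Pp' => /and3P [_ _ n0].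
case: H => [[[a0 na0] Hp] | [[a0 na0] Hn]].
- apply: na0; apply/HR => L LP.
  have L0 : L != set0 by apply/negP => /eqP E; rewrite -E LP in n0.
  have Lpr : L \proper [set: S].
    rewrite properT; apply/negP => /eqP E.
    by have [i] := @other_pt _ P _ Pp P1 LP; rewrite E inE.
  have [a [Ra ra]] := Hp L L0 Lpr (restr a0 L).
  by rewrite -ra; apply: (proj1 (HR a) Ra).
- have [L0 [L0P nRL]] : exists L0, L0 \in P /\ ~ RL L0 (restr a0 L0).
    apply: NNPP => C; apply: na0; apply/HR => L LP.
    by apply: NNPP => nr; apply: C; exists L.
  have [i iL0] := @other_pt _ P _ Pp P1 L0P.
  have [b nb] := not_all_ex_not _ _ (Hn i).
  pose a x := if x == i then b (exist _ i (set11 i)) else a0 x.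
  have Ra : R a.
    apply: NNPP => nRa; apply: nb; exists a; split => //.
    apply: functional_extensionality => [[x hx]].
    rewrite /restr /a /=.
    have exi : x = i by apply/eqP; rewrite -in_set1.
    subst x.
    rewrite eqxx; congr b; congr exist; apply: eq_irrelevance.
  apply: nRL.
  have -> : restr a0 L0 = restr a L0.
    apply: functional_extensionality => [[x hx]].
    rewrite /restr /a /=; case: (eqVneq x i) => // exi.
    by subst x; rewrite hx in iL0.
  exact: (proj1 (HR a) Ra).
Qed.
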